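(* Let $\ell\ge2$ and let $Z^{(\ell-1)},Z^{(\ell)}$ be consecutive iterates of the iterative SDP described in the context (in particular both are symmetric positive semidefinite). Suppose that $Z^{(\ell-1)}\neq0$ and $$\hat\varepsilon(Z^{(\ell)},Z^{(\ell-1)})\le\hat\varepsilon(Z^{(\ell-1)},Z^{(\ell-1)}).$$ Then $\varepsilon(Z^{(\ell)})\le\varepsilon(Z^{(\ell-1)})$. Moreover, if the assumed inequality is strict, then $\varepsilon(Z^{(\ell)})<\varepsilon(Z^{(\ell-1)})$.
   Context: For symmetric $Y\in\mathbb{R}^{p\times p}$, $\lambda_1(Y)\ge\dots\ge\lambda_p(Y)$ are its eigenvalues, $\nu_1(Y)$ a unit eigenvector for $\lambda_1(Y)$. With $p=n(n+m)$, $\varepsilon(Z):=\sum_{i=2}^p|\lambda_i(Z)|$ and $\hat\varepsilon(Z,Z'):=\mathrm{tr}(Z)-\nu_1(Z')^\top Z\nu_1(Z')$. Iterative SDP: given $\tilde\beta\in(0,1)$, $\eta\ge0$, $Z_{\rm ub}>0$, symmetric-matrix-valued functions $S^{(k)}_{\rm lmi}(Q,Z,\tilde\beta)\in\mathbb{R}^{2\tilde n\times2\tilde n}$ ($k=1,\dots,N$, $\tilde n=n(n+1)/2$) affine in $(Q,Z)$, and $Z'$, consider the problem: minimize $\hat\varepsilon(Z,Z')$ over symmetric $Z\in\mathbb{R}^{p\times p}$ and symmetric $Q^{(1)},\dots,Q^{(N)}\in\mathbb{R}^{\tilde n\times\tilde n}$ subject to $S^{(k)}_{\rm lmi}(Q^{(k)},Z,\tilde\beta)\succeq\eta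 I_{2\tilde n}$ and $Q^{(k)}\succeq\eta I_{\tilde n}$ for all $k$, $Z\succeq0$, $\mathrm{tr}(Z)\le Z_{\rm ub}$. $Z^{(1)}$ is a solution of this problem with the objective replaced by $\mathrm{tr}(Z)$, and for $\ell\ge2$, $Z^{(\ell)}$ is a solution with $Z'=Z^{(\ell-1)}$. *)

(* Defs.v *)
From HB Require Import structures.
From mathcomp Require Import all_boot all_order all_algebra.
From mathcomp Require Import reals.
From Stdlib Require Import ClassicalEpsilon.
Set Implicit Arguments.
Unset Strict Implicit.
Unset Printing Implicit Defensive.
Import Order.TTheory GRing.Theory Num.Theory.
Local Open Scope ring_scope.

Section Spec.
Variable R : realType.

Definition symmx {k} (A : 'M[R]_k) : Prop := A^T = A.

Definition psdmx {k} (A : 'M[R]_k) : Prop :=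
  forall x : 'cV[R]_k, 0 <= (x^T *m A *m x) 0 0.

Definition is_spectrum {k} (A : 'M[R]_k) (s : seq R) : Prop :=
  sorted (fun x y => y <= x) s /\ char_poly A = \prod_(x <- s) ('X - x%:P).

(* The (nonincreasing) eigenvalue list lambda_1(A) >= ... >= lambda_k(A).
   (For symmetric real matrices such a list exists and is unique.) *)
Definition eigvals {k} (A : 'M[R]_k) : seq R :=
  epsilon (inhabits [::]) (is_spectrum A).

Definition lambda1 {k} (A : 'M[R]_k) : R := head 0 (eigvals A).

Definition is_nu1 {k} (A : 'M[R]_k) (v : 'cV[R]_k) : Prop :=
  (v^T *m v) 0 0 = 1 /\ A *m v = lambda1 A *: v.

Definition eps {k} (Z : 'M[R]_k) : R := \sum_(x <- behead (eigvals Z)) `|x|.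

(* hat-epsilon(Z,Z') = tr Z - nu_1(Z')^T Z nu_1(Z'), with v = nu_1(Z'). *)
Definition epshat {k} (Z : 'M[R]_k) (v : 'cV[R]_k) : R :=
  \tr Z - (v^T *m Z *m v) 0 0.

Definition pdim (n m : nat) : nat := (n * (n + m))%N.
Definition ntil (n : nat) : nat := ((n * n.+1)./2)%N.

Definition affine2 {a b c} (S : 'M[R]_a -> 'M[R]_b -> 'M[R]_c) : Prop :=
  forall (t : R) Q1 Q2 Z1 Z2,
    S (t *: Q1 + (1 - t) *: Q2) (t *: Z1 + (1 - t) *: Z2)
    = t *: S Q1 Z1 + (1 - t) *: S Q2 Z2.

Definition sdp_feasible (n m N : nat) (beta eta Zub : R)
  (S : 'I_N -> 'M[R]_(ntil n) -> 'M[R]_(pdim n m) -> R -> 'M[R]_(2 * ntil n))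
  (Z : 'M[R]_(pdim n m)) (Q : 'I_N -> 'M[R]_(ntil n)) : Prop :=
  symmx Z /\
  (forall k, symmx (Q k)) /\
  (forall k, psdmx (S k (Q k) Z beta - eta%:M)) /\
  (forall k, psdmx (Q k - eta%:M)) /\
  psdmx Z /\
  \tr Z <= Zub.

Definition sdp_iterates (n m N : nat) (beta eta Zub : R)
  (S : 'I_N -> 'M[R]_(ntil n) -> 'M[R]_(pdim n m) -> R -> 'M[R]_(2 * ntil n))
  (Zs : nat -> 'M[R]_(pdim n m)) (Qs : nat -> 'I_N -> 'M[R]_(ntil n))
  (vs : nat -> 'cV[R]_(pdim n m)) : Prop :=
  (forall l, (1 <= l)%N -> is_nu1 (Zs l) (vs l)) /\
  (sdp_feasible beta eta Zub S (Zs 1%N) (Qs 1%N) /\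
   forall Z Q, sdp_feasible beta eta Zub S Z Q -> \tr (Zs 1%N) <= \tr Z) /\
  (forall l, (2 <= l)%N ->
     sdp_feasible beta eta Zub S (Zs l) (Qs l) /\
     forall Z Q, sdp_feasible beta eta Zub S Z Q ->
       epshat (Zs l) (vs l.-1) <= epshat Z (vs l.-1)).

End Spec.

(* Main.v *)
Require Import Defs.
From HB Require Import structures.
From mathcomp Require Import all_boot all_order all_algebra.
From mathcomp Require Import reals complex.
From Stdlib Require Import ClassicalEpsilon.
Import Order.TTheory GRing.Theory Num.Theory.
Local Open Scope ring_scope.

Lemma char_poly_conj (F : fieldType) k (P A : 'M[F]_k) : P \in unitmx ->
  char_poly (invmx P *m A *m P) = char_poly A.
Proof.
move=> uP; rewrite /char_poly /char_poly_mx.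

have -> : 'X%:M - map_mx (@polyC F) (invmx P *m A *m P) =
  map_mx (@polyC F) (invmx P) *m ('X%:M - map_mx (@polyC F) A) *m map_mx (@polyC F) P.
  rewrite mulmxBr mulmxBl !map_mxM; congr (_ - _).
  by rewrite scalar_mxC -mulmxA -map_mxM mulVmx // map_mx1 mulmx1.

rewrite !det_mulmx !det_map_mx mulrC mulrA -rmorphM -det_mulmx mulmxV //.
by rewrite det1 rmorph1 mul1r.
Qed.

Lemma char_poly_diag (F : fieldType) k (d : 'rV[F]_k) :
  char_poly (diag_mx d) = \prod_(i < k) ('X - (d 0 i)%:P).
Proof.
rewrite char_poly_trig ?diag_mx_is_trig //.
by apply: eq_bigr => i _; rewrite mxE eqxx mulr1n.
Qed.

Section S.
Variable R : rcfType.
Local Notation C := (R[i]).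
Local Notation toC := (real_complex R).

Lemma toC_real (x : R) : toC x \is Num.real.
Proof.
by case: (lerP 0 x) => h; apply/orP; [left|right]; rewrite lecE /= eqxx /= ?(ltW h).
Qed.

Lemma spectral_real k (Z : 'M[R]_k) : Z^T = Z ->
  exists P : 'M[C]_k, exists r : 'rV[R]_k,
   P \is unitarymx /\
   map_mx toC Z = invmx P *m diag_mx (map_mx toC r) *m P.
Proof.
move=> Zs.
have Zh : map_mx toC Z \is hermsymmx.
  apply: realsym_hermsym.
    by apply/is_hermitianmxP; rewrite expr0 scale1r map_mx_id // map_trmx Zs.
  by apply/mxOverP => i j; rewrite mxE toC_real.
have /hermitian_normalmx /orthomx_spectralP E := Zh.
have Hr := hermitian_spectral_diag_real Zh.
exists (spectralmx (map_mx toC Z)), (map_mx (@complex.Re R) (spectral_diag (map_mx toC Z))).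
split; first exact: spectral_unitarymx.
rewrite {1}E; congr (_ *m _ *m _); congr diag_mx.
apply/matrixP => i j; rewrite !mxE complexRe.
by apply/esym/Creal_ReP; move/mxOverP: Hr; apply.
Qed.

Lemma toC_conj (x : R) : (toC x)^* = toC x.
Proof. exact: conjc_real. Qed.

Lemma spectral_facts k (Z : 'M[R]_k) : Z^T = Z ->
  exists r : 'rV[R]_k,
   char_poly Z = \prod_(i < k) ('X - (r 0 i)%:P) /\
   forall v : 'cV[R]_k, (v^T *m v) 0 0 = 1 -> forall lam,
     (forall i, r 0 i <= lam) -> (v^T *m Z *m v) 0 0 <= lam.
Proof.
move=> /spectral_real [P [r [Pu ZE]]].
have Punit := unitarymx_unit Pu.
exists r; split.
  apply: (@map_poly_inj _ _ toC).
  rewrite map_char_poly ZE char_poly_conj // char_poly_diag map_prod_XsubC.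
  by apply: eq_bigr => i _; rewrite mxE.
move=> v v1 lam hlam.
pose w := map_mx toC v.
have wT : map_mx Num.conj ((map_mx toC v)^T) = map_mx toC (v^T).
  by apply/matrixP => i j; rewrite !mxE toC_conj.
pose u := P *m map_mx toC v.
have PP : map_mx Num.conj (P^T) *m P = 1%:M.
  by rewrite -invmx_unitary // mulVmx.
have key : map_mx toC (v^T *m Z *m v) = map_mx Num.conj (u^T) *m diag_mx (map_mx toC r) *m u.
  rewrite !map_mxM ZE invmx_unitary //.
  by rewrite /u trmx_mul map_mxM wT !mulmxA.
have key1 : map_mx toC (v^T *m v) = map_mx Num.conj (u^T) *m u.
  rewrite !map_mxM /u trmx_mul map_mxM wT -!mulmxA.
  by rewrite (mulmxA _ P) PP mul1mx.
rewrite -lecR.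
have E1 : forall M : 'M[R]_1, toC (M 0 0) = map_mx toC M 0 0.
  by move=> M; rewrite [RHS]mxE.
rewrite E1.
have -> : toC lam = toC lam * map_mx toC (v^T *m v) 0 0 by rewrite -E1 v1 rmorph1 mulr1.
rewrite key key1 -mulmxA mul_diag_mx !mxE mulr_sumr.
apply: ler_sum => j _; rewrite !mxE.
rewrite mulrCA; apply: ler_wpM2r; first by rewrite mulrC mul_conjC_ge0.
by rewrite lecR.
Qed.
End S.

Section Main.
Variable R : realType.

Lemma head_max (s : seq R) x : sorted (fun x y => y <= x) s -> x \in s -> x <= head 0 s.
Proof.
case: s => [|h t] //= srt; rewrite inE => /orP [/eqP->|xt] //.
have tr : transitive (fun x y : R => y <= x) by move=> a b c h1 h2; exact: le_trans h2 h1.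
by move: (order_path_min tr srt) => /allP /(_ x xt).
Qed.

Lemma spec_exists {k} {Z : 'M[R]_k} : Z^T = Z -> is_spectrum Z (eigvals Z).
Proof.
move=> /(@spectral_facts _ _ _) [r [hc _]].
rewrite /eigvals; apply: epsilon_spec.
exists (sort (fun x y : R => y <= x) [seq r 0 i | i <- enum 'I_k]); split.
  by apply: sort_sorted => x y; exact: le_total.
rewrite hc [RHS](perm_big _ (permEl (perm_sort _ _))) big_map big_enum.
by [].
Qed.

Lemma spec_trace {k} {Z : 'M[R]_k} : Z^T = Z -> \tr Z = \sum_(x <- eigvals Z) x.
Proof.
move=> /spec_exists [_ hc].
have hs : size (eigvals Z) = k.
  by apply: succn_inj; rewrite -(size_char_poly Z) hc size_prod_XsubC.
case: k Z hc hs => [|k] Z hc hs.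
  by case: (eigvals Z) hs => // _; rewrite big_nil /mxtrace big_ord0.
apply: oppr_inj; rewrite -char_poly_trace // hc -coefPn_prod_XsubC ?hs //.
Qed.

Lemma spec_root {k} {Z : 'M[R]_k} {x} : Z^T = Z -> x \in eigvals Z -> root (char_poly Z) x.
Proof. by move=> /spec_exists [_ ->]; rewrite root_prod_XsubC. Qed.

Lemma rayleigh {k} {Z : 'M[R]_k} {v : 'cV[R]_k} : Z^T = Z -> (v^T *m v) 0 0 = 1 ->
  (v^T *m Z *m v) 0 0 <= lambda1 Z.
Proof.
move=> hZ hv; have [srt _] := spec_exists hZ.
have [r [hc hr]] := @spectral_facts _ _ _ hZ.
apply: hr => // i; apply: head_max => //.
have : root (char_poly Z) (r 0 i).
  by rewrite hc (bigD1 i) //= rootM root_XsubC eqxx.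
have [_ ->] := spec_exists hZ.
by rewrite root_prod_XsubC.
Qed.

Lemma spec_nonneg {k} {Z : 'M[R]_k} {x} : Z^T = Z -> psdmx Z -> x \in eigvals Z -> 0 <= x.
Proof.
move=> hZ hp hx; have := spec_root hZ hx.
rewrite -eigenvalue_root_char => /eigenvalueP [v hv v0].
have := hp v^T; rewrite trmxK hv -scalemxAl mxE.
have pos : 0 < (v *m v^T) 0 0.
  have ge : forall j : 'I_k, true -> 0 <= v 0 j * v^T j 0.
    by move=> j _; rewrite mxE -expr2 sqr_ge0.
  rewrite mxE lt_def sumr_ge0 // andbT.
  apply: contra v0 => /eqP h; apply/eqP/rowP => j; rewrite mxE.
  have hj := @psumr_eq0P _ _ _ _ ge h j isT. move: hj.
  by rewrite mxE -expr2 => /eqP; rewrite sqrf_eq0 => /eqP.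
by rewrite pmulr_lge0.
Qed.

Lemma eps_eq {k} {Z : 'M[R]_k} : Z^T = Z -> psdmx Z -> eps Z = \tr Z - lambda1 Z.
Proof.
move=> hZ hp; rewrite (spec_trace hZ) /eps /lambda1.
have hn : forall x, x \in eigvals Z -> 0 <= x by move=> x; exact: spec_nonneg.
case: (eigvals Z) hn => [|h t] hn /=.
  by rewrite !big_nil subr0.
rewrite big_cons addrAC subrr add0r; apply: eq_big_seq => x xt.
by rewrite ger0_norm // hn // inE xt orbT.
Qed.

End Main.

Theorem theorem9 (R : realType) (n m N : nat) (beta eta Zub : R)
  (S : 'I_N -> 'M[R]_(ntil n) -> 'M[R]_(pdim n m) -> R -> 'M[R]_(2 * ntil n))
  (Zs : nat -> 'M[R]_(pdim n m)) (Qs : nat -> 'I_N -> 'M[R]_(ntil n))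
  (vs : nat -> 'cV[R]_(pdim n m)) (l : nat) :
  0 < beta < 1 -> 0 <= eta -> 0 < Zub ->
  (forall k Q Z, symmx Q -> symmx Z -> symmx (S k Q Z beta)) ->
  (forall k, affine2 (fun Q Z => S k Q Z beta)) ->
  sdp_iterates beta eta Zub S Zs Qs vs ->
  (2 <= l)%N ->
  Zs l.-1 != 0 ->
  epshat (Zs l) (vs l.-1) <= epshat (Zs l.-1) (vs l.-1) ->
  eps (Zs l) <= eps (Zs l.-1) /\
  (epshat (Zs l) (vs l.-1) < epshat (Zs l.-1) (vs l.-1) ->
   eps (Zs l) < eps (Zs l.-1)).
Proof.
move=> _ _ _ _ _ [Hnu [[F1 _] H3]] hl _ hle.
have [sym2 [_ [_ [_ [psd2 _]]]]] := (H3 l hl).1.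
have feas1 : sdp_feasible beta eta Zub S (Zs l.-1) (Qs l.-1).
  case: l hl {hle sym2 psd2} => [|[|[|l']]] // _.
  exact: (H3 l'.+2 isT).1.
have [sym1 [_ [_ [_ [psd1 _]]]]] := feas1.
have [hv1 hv2] : is_nu1 (Zs l.-1) (vs l.-1) by apply: Hnu; case: l hl {hle sym2 psd2 feas1 sym1 psd1}.
have E1 : epshat (Zs l.-1) (vs l.-1) = eps (Zs l.-1).
  rewrite (@eps_eq _ _ _ sym1 psd1) /epshat -mulmxA hv2 -scalemxAr mxE hv1 mulr1.
  by [].
have E2 : eps (Zs l) <= epshat (Zs l) (vs l.-1).
  by rewrite (@eps_eq _ _ _ sym2 psd2) /epshat lerB // rayleigh.
split; first by rewrite -E1; exact: le_trans hle.
by move=> hlt; rewrite -E1; exact: le_lt_trans hlt.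
Qed.
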